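(* Let $\mathcal{S}=D_S\cup A\cup B$ with $D_S=\{0_20_2\rhd'\to 0_3\rhd',\ 1_20_2\rhd'\to\rhd',\ 1_2\rhd'\to2_3\rhd'\}$, and let $\mathcal{S}_1=\mathcal{S}\setminus\{0_20_2\rhd'\to0_3\rhd'\}$ and $\mathcal{S}_2=\mathcal{S}\setminus\{1_20_2\rhd'\to\rhd'\}$. Then (1) $\mathcal{S}_1$ is terminating if and only if every nonconvergent $S$-trajectory contains some $n\equiv1\pmod 8$; (2) $\mathcal{S}_2$ is terminating if and only if every nonconvergent $S$-trajectory contains some $n\equiv5\pmod8$.
   Context: $\mathbb{N}_{\mathrm{odd}}=\{1,3,5,\dots\}$ and $S:\mathbb{N}_{\mathrm{odd}}\to\mathbb{N}_{\mathrm{odd}}$ is $S(n)=(3n+1)/4$ if $n\equiv1\pmod8$, $S(n)=(n-1)/4$ if $n\equiv5\pmod 8$, $S(n)=(3n+1)/2$ if $n\equiv3\pmod4$. The $S$-trajectory of $n$ is $(n,S(n),S^2(n),\dots)$; it is nonconvergent if it does not contain $1$. An SRS induces $u\ell v\to urv$; terminating means no infinite rewrite sequence. Alphabet $\{0_2,1_2,0_3,1_3,2_3,\lhd,\rhd'\}$ (intended reading $\rhd'(x)=2x+1$); $A=\{0_20_3\to0_30_2,\ 0_21_3\to0_31_2,\ 0_22_3\to1_30_2,\ 1_20_3\to1_31_2,\ 1_21_3\to2_30_2,\ 1_22_3\to2_31_2\}$; $B=\{\lhd0_3\to\lhd1_2,\ \lhd1_3\to\lhd0_20_2,\ \lhd2_3\to\lhd0_21_2\}$.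 *)

(* Defs.v *)
From Stdlib Require Import List Arith.
Import ListNotations.

(* S(n) = (3n+1)/4 if n = 1 mod 8, (n-1)/4 if n = 5 mod 8, (3n+1)/2 if n = 3 mod 4.
   Only ever applied to odd n (S maps odd naturals to odd naturals);
   the value on even n is irrelevant. *)
Definition Smap (n : nat) : nat :=
  if Nat.eqb (n mod 8) 1 then (3 * n + 1) / 4
  else if Nat.eqb (n mod 8) 5 then (n - 1) / 4
  else (3 * n + 1) / 2.

Definition traj (n k : nat) : nat := Nat.iter k Smap n.

Definition nonconvergent (n : nat) : Prop := forall k, traj n k <> 1.

Inductive sym : Type :=
  | s0_2 | s1_2 | s0_3 | s1_3 | s2_3 | lhd | rhd'.

Definition word := list sym.
Definition rule := (word * word)%type.
Definition srs := list rule.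

Definition step (R : srs) (x y : word) : Prop :=
  exists u v l r, In (l, r) R /\ x = u ++ l ++ v /\ y = u ++ r ++ v.

Definition terminating (R : srs) : Prop :=
  ~ exists f : nat -> word, forall i, step R (f i) (f (S i)).

Definition A_rules : srs :=
  [ ([s0_2; s0_3], [s0_3; s0_2]);
    ([s0_2; s1_3], [s0_3; s1_2]);
    ([s0_2; s2_3], [s1_3; s0_2]);
    ([s1_2; s0_3], [s1_3; s1_2]);
    ([s1_2; s1_3], [s2_3; s0_2]);
    ([s1_2; s2_3], [s2_3; s1_2]) ].

Definition B_rules : srs :=
  [ ([lhd; s0_3], [lhd; s1_2]);
    ([lhd; s1_3], [lhd; s0_2; s0_2]);
    ([lhd; s2_3], [lhd; s0_2; s1_2]) ].

Definition DS_r1 : rule := ([s0_2; s0_2; rhd'], [s0_3; rhd']).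
Definition DS_r2 : rule := ([s1_2; s0_2; rhd'], [rhd']).
Definition DS_r3 : rule := ([s1_2; rhd'], [s2_3; rhd']).

Definition DS_rules : srs := [DS_r1; DS_r2; DS_r3].

Definition S_rules : srs := DS_rules ++ A_rules ++ B_rules.
Definition S1_rules : srs := [DS_r2; DS_r3] ++ A_rules ++ B_rules.
Definition S2_rules : srs := [DS_r1; DS_r3] ++ A_rules ++ B_rules.

(* Main.v *)
Require Import Defs.
From Stdlib Require Import List Arith.
From Stdlib Require Import Lia ZArith ZifyNat Classical ClassicalEpsilon.
Import ListNotations.

Definition upd (x : nat) (s : sym) : nat :=
  match s with
  | s0_2 => 2*x | s1_2 => 2*x+1 | s0_3 => 3*x | s1_3 => 3*x+1 | s2_3 => 3*x+2
  | _ => x end.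
Definition vl (x : nat) (u : word) : nat := fold_left upd u x.

Lemma vl_app x u z : vl x (u ++ z) = vl (vl x u) z.
Proof. unfold vl. apply fold_left_app. Qed.

Lemma vl_snoc x u d : vl x (u ++ [d]) = upd (vl x u) d.
Proof. rewrite vl_app. reflexivity. Qed.

Lemma traj_S n k : traj n (S k) = traj (Smap n) k.
Proof. unfold traj. apply Nat.iter_succ_r. Qed.

Ltac smap := unfold Smap; repeat match goal with |- context[Nat.eqb ?a ?b] =>
  destruct (Nat.eqb_spec a b) end; lia.

Lemma Smap_r1 y : Smap (2*(2*(2*y))+1) = 2*(3*y)+1. Proof. smap. Qed.
Lemma Smap_r2 y : Smap (2*(2*(2*y+1))+1) = 2*y+1. Proof. smap. Qed.
Lemma Smap_r3 y : Smap (2*(2*y+1)+1) = 2*(3*y+2)+1. Proof. smap. Qed.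
Lemma Smap_one m : Smap m = 1 -> m = 1 \/ m = 5.
Proof. unfold Smap; repeat match goal with |- context[Nat.eqb ?a ?b] =>
  destruct (Nat.eqb_spec a b) end; lia. Qed.

Definition minp (c n k : nat) : Prop :=
  traj n k mod 8 = c /\ forall j, traj n j mod 8 = c -> k <= j.
Definition hh (c n : nat) : nat := epsilon (inhabits 0) (minp c n).

Lemma least_ex (P : nat -> Prop) k : P k -> exists m, P m /\ forall j, P j -> m <= j.
Proof.
  induction k as [k IH] using (well_founded_induction lt_wf). intro Hk.
  destruct (classic (exists j, j < k /\ P j)) as [[j [Hj Pj]]|Hn].
  - exact (IH j Hj Pj).
  - exists k. split; [exact Hk|]. intros j Pj.
    destruct (le_gt_dec k j); [assumption|]. exfalso; apply Hn; eauto.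
Qed.

Lemma hh_spec c n : (exists k, traj n k mod 8 = c) -> minp c n (hh c n).
Proof.
  intros [k Hk]. unfold hh. apply epsilon_spec.
  apply (least_ex (fun k => traj n k mod 8 = c) k Hk).
Qed.

Lemma hh_dec c n : n mod 8 <> c -> (exists k, traj n k mod 8 = c) ->
  hh c (Smap n) < hh c n.
Proof.
  intros Hn Hex. destruct (hh_spec c n Hex) as [H1 H2].
  destruct (hh c n) as [|k] eqn:E.
  - unfold traj in H1; simpl in H1. contradiction.
  - rewrite traj_S in H1.
    assert (Hex' : exists k, traj (Smap n) k mod 8 = c) by eauto.
    destruct (hh_spec c (Smap n) Hex') as [_ H3]. specialize (H3 k H1). lia.
Qed.

Fixpoint Hf (c x : nat) (w : word) : nat :=
  match w with
  | [] => 0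
  | lhd :: w' => Hf c 1 w'
  | rhd' :: w' => hh c (2*x+1) + Hf c 1 w'
  | s :: w' => Hf c (upd x s) w'
  end.

Lemma Hf_pre_eq c u z1 z2 : (forall y, 1 <= y -> Hf c y z1 = Hf c y z2) ->
  forall x, 1 <= x -> Hf c x (u ++ z1) = Hf c x (u ++ z2).
Proof.
  intros H. induction u as [|s u IH]; intros x Hx; simpl; [auto|].
  destruct s; simpl; rewrite IH by lia; reflexivity.
Qed.

Lemma Hf_pre_lt c u z1 z2 : (forall y, 1 <= y -> Hf c y z1 < Hf c y z2) ->
  forall x, 1 <= x -> Hf c x (u ++ z1) < Hf c x (u ++ z2).
Proof.
  intros H. induction u as [|s u IH]; intros x Hx; simpl; [auto|].
  destruct s; simpl; try (apply IH; lia). pose proof (IH 1 (le_n 1)). lia.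
Qed.

Definition tern (s : sym) : bool := match s with s0_3 | s1_3 | s2_3 => true | _ => false end.
Definition bin (s : sym) : bool := match s with s0_2 | s1_2 => true | _ => false end.
Fixpoint Tc (w : word) : nat :=
  match w with [] => 0 | s :: w' => (if tern s then 1 else 0) + Tc w' end.
Lemma Tc_app u v : Tc (u ++ v) = Tc u + Tc v.
Proof. induction u as [|s u IH]; simpl; [reflexivity|]. rewrite IH. lia. Qed.

Fixpoint Phi (b : nat) (w : word) : nat :=
  match w with [] => 0
  | s :: w' => (if tern s then b else 0) + Phi (if bin s then S b else b) w' end.
Lemma Phi_pre u z1 z2 : (forall b, Phi b z1 < Phi b z2) ->
  forall b, Phi b (u ++ z1) < Phi b (u ++ z2).
Proof.
  intros H. induction u as [|s u IH]; intros b; simpl; [apply H|].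
  pose proof (IH (if bin s then S b else b)). lia.
Qed.

Definition lt3 (p q : nat * nat * nat) : Prop :=
  fst (fst p) < fst (fst q) \/ (fst (fst p) = fst (fst q) /\
   (snd (fst p) < snd (fst q) \/ (snd (fst p) = snd (fst q) /\ snd p < snd q))).

Lemma acc3 a b c : Acc lt3 (a, b, c).
Proof.
  revert b c. induction a as [a IHa] using (well_founded_induction lt_wf).
  intro b. induction b as [b IHb] using (well_founded_induction lt_wf).
  intro c. induction c as [c IHc] using (well_founded_induction lt_wf).
  constructor. intros [[a' b'] c'] H. unfold lt3 in H; simpl in H.
  destruct H as [H|[H1 [H|[H2 H]]]]; subst; auto.
Qed.

Lemma no_chain (f : nat -> nat * nat * nat) : (forall i, lt3 (f (S i)) (f i)) -> False.
Proof.
  intro H.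
  assert (G : forall x, Acc lt3 x -> forall g : nat -> nat * nat * nat,
     g 0 = x -> (forall i, lt3 (g (S i)) (g i)) -> False).
  { intros x Hacc. induction Hacc as [x _ IH]. intros g Hg Hi.
    assert (H0 : lt3 (g 1) x) by (rewrite <- Hg; apply Hi).
    exact (IH (g 1) H0 (fun i => g (S i)) eq_refl (fun i => Hi (S i))). }
  destruct (f 0) as [[a b] c] eqn:E.
  exact (G _ (acc3 a b c) f E H).
Qed.

Definition mu (c : nat) (w : word) : nat * nat * nat := (Hf c 1 w, Tc w, Phi 0 w).

Lemma A_dec c l r u v : In (l, r) A_rules -> lt3 (mu c (u ++ r ++ v)) (mu c (u ++ l ++ v)).
Proof.
  intro H. unfold mu, lt3; cbn [fst snd]. right.
  simpl in H; repeat destruct H as [H|H]; try contradiction; injection H; intros; subst;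
  (split;
  [ apply Hf_pre_eq; [intros y Hy; simpl; f_equal; lia | lia]
  | right; split; [rewrite !Tc_app; simpl; lia | apply Phi_pre; intro b; simpl; lia]]).
Qed.

Lemma B_dec c l r u v : In (l, r) B_rules -> lt3 (mu c (u ++ r ++ v)) (mu c (u ++ l ++ v)).
Proof.
  intro H. unfold mu, lt3; cbn [fst snd]. right.
  simpl in H; repeat destruct H as [H|H]; try contradiction; injection H; intros; subst;
  (split;
  [ apply Hf_pre_eq; [intros y Hy; simpl; reflexivity | lia]
  | left; rewrite !Tc_app; simpl; lia]).
Qed.

Lemma D_dec c l r u v : (forall y, 1 <= y -> Hf c y (r ++ v) < Hf c y (l ++ v)) ->
  lt3 (mu c (u ++ r ++ v)) (mu c (u ++ l ++ v)).
Proof.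
  intro H. unfold mu, lt3; cbn [fst snd]. left. apply Hf_pre_lt; [exact H | lia].
Qed.

Definition Hyp (c : nat) := forall n, Nat.odd n = true -> nonconvergent n ->
        exists k, traj n k mod 8 = c.

Lemma odd21 z : Nat.odd (2*z+1) = true.
Proof. apply Nat.odd_spec. exists z. lia. Qed.

Lemma ex1 : Hyp 1 -> forall z, exists k, traj (2*z+1) k mod 8 = 1.
Proof.
  intros H z. destruct (classic (nonconvergent (2*z+1))) as [Hn|Hn].
  - apply H; [apply odd21 | exact Hn].
  - unfold nonconvergent in Hn. apply not_all_ex_not in Hn. destruct Hn as [k Hk].
    exists k. apply NNPP in Hk. rewrite Hk. reflexivity.
Qed.

Lemma ex5 : Hyp 5 -> forall z, 1 <= z -> exists k, traj (2*z+1) k mod 8 = 5.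
Proof.
  intros H z Hz. destruct (classic (nonconvergent (2*z+1))) as [Hn|Hn].
  - apply H; [apply odd21 | exact Hn].
  - unfold nonconvergent in Hn. apply not_all_ex_not in Hn. destruct Hn as [k Hk].
    apply NNPP in Hk.
    destruct (least_ex (fun k => traj (2*z+1) k = 1) k Hk) as [m [Hm Hmin]].
    destruct m as [|m].
    + unfold traj in Hm; simpl in Hm. lia.
    + exists m. assert (E : traj (2*z+1) (S m) = Smap (traj (2*z+1) m)) by reflexivity.
      rewrite E in Hm. apply Smap_one in Hm. destruct Hm as [Hm|Hm].
      * specialize (Hmin m Hm). lia.
      * rewrite Hm. reflexivity.
Qed.

Lemma term1 : Hyp 1 -> terminating S1_rules.
Proof.
  intros HH [f Hfs]. apply (no_chain (fun i => mu 1 (f i))). intro i.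
  destruct (Hfs i) as (u & v & l & r & Hin & E1 & E2). rewrite E1, E2.
  unfold S1_rules in Hin. cbn [app] in Hin.
  destruct Hin as [Hin|Hin]; [|destruct Hin as [Hin|Hin]].
  - injection Hin; intros; subst. apply D_dec. intros y Hy. cbn [Hf upd app].
    pose proof (hh_dec 1 (2*(2*(2*y+1))+1) ltac:(lia) (ex1 HH _)) as K.
    rewrite Smap_r2 in K. lia.
  - injection Hin; intros; subst. apply D_dec. intros y Hy. cbn [Hf upd app].
    pose proof (hh_dec 1 (2*(2*y+1)+1) ltac:(lia) (ex1 HH _)) as K.
    rewrite Smap_r3 in K. lia.
  - apply in_app_or in Hin. destruct Hin as [Hin|Hin].
    + apply A_dec; exact Hin.
    + apply B_dec; exact Hin.
Qed.

Lemma term2 : Hyp 5 -> terminating S2_rules.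
Proof.
  intros HH [f Hfs]. apply (no_chain (fun i => mu 5 (f i))). intro i.
  destruct (Hfs i) as (u & v & l & r & Hin & E1 & E2). rewrite E1, E2.
  unfold S2_rules in Hin. cbn [app] in Hin.
  destruct Hin as [Hin|Hin]; [|destruct Hin as [Hin|Hin]].
  - injection Hin; intros; subst. apply D_dec. intros y Hy. cbn [Hf upd app].
    pose proof (hh_dec 5 (2*(2*(2*y))+1) ltac:(lia) (ex5 HH (2*(2*y)) ltac:(lia))) as K.
    rewrite Smap_r1 in K. lia.
  - injection Hin; intros; subst. apply D_dec. intros y Hy. cbn [Hf upd app].
    pose proof (hh_dec 5 (2*(2*y+1)+1) ltac:(lia) (ex5 HH (2*y+1) ltac:(lia))) as K.
    rewrite Smap_r3 in K. lia.
  - apply in_app_or in Hin. destruct Hin as [Hin|Hin].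
    + apply A_dec; exact Hin.
    + apply B_dec; exact Hin.
Qed.

Definition digit (s : sym) : Prop := s <> lhd /\ s <> rhd'.
Definition isb (s : sym) : Prop := s = s0_2 \/ s = s1_2.
Definition ist (s : sym) : Prop := s = s0_3 \/ s = s1_3 \/ s = s2_3.

Lemma rep x : 1 <= x -> exists u, Forall isb u /\ vl 1 u = x.
Proof.
  induction x as [x IH] using (well_founded_induction lt_wf). intro Hx.
  destruct (Nat.eq_dec x 1) as [->|Hne]; [exists []; split; [constructor|reflexivity]|].
  destruct (IH (x / 2) ltac:(lia) ltac:(lia)) as [u [Hu Hv]].
  destruct (Nat.eq_dec (x mod 2) 0).
  - exists (u ++ [s0_2]). split.
    + apply Forall_app; split; [exact Hu | constructor; [left; reflexivity | constructor]].
    + rewrite vl_snoc, Hv. cbn [upd]. lia.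
  - exists (u ++ [s1_2]). split.
    + apply Forall_app; split; [exact Hu | constructor; [right; reflexivity | constructor]].
    + rewrite vl_snoc, Hv. cbn [upd]. lia.
Qed.

Lemma leftmost u : Forall digit u -> Forall isb u \/
  exists p t q, Forall isb p /\ ist t /\ u = p ++ t :: q /\ Forall digit q.
Proof.
  induction u as [|s u IH]; intro H; [left; constructor|].
  inversion H as [|? ? Hs Hu]; subst. destruct (IH Hu) as [Hb|(p & t & q & Hp & Ht & E & Hq)].
  - destruct s.
    + left; constructor; [left; reflexivity | exact Hb].
    + left; constructor; [right; reflexivity | exact Hb].
    + right; exists [], s0_3, u; repeat split; try constructor; auto; left; reflexivity.
    + right; exists [], s1_3, u; repeat split; try constructor; auto; right; left; reflexivity.
    + right; exists [], s2_3, u; repeat split; try constructor; auto; right; right; reflexivity.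
    + destruct Hs; congruence.
    + destruct Hs; congruence.
  - destruct s.
    + right; exists (s0_2 :: p), t, q; subst; repeat split; auto; constructor; auto; left; auto.
    + right; exists (s1_2 :: p), t, q; subst; repeat split; auto; constructor; auto; right; auto.
    + right; exists [], s0_3, u; repeat split; try constructor; auto; left; reflexivity.
    + right; exists [], s1_3, u; repeat split; try constructor; auto; right; left; reflexivity.
    + right; exists [], s2_3, u; repeat split; try constructor; auto; right; right; reflexivity.
    + destruct Hs; congruence.
    + destruct Hs; congruence.
Qed.

Lemma snoc_cases (u : word) : u = [] \/ exists u1 d, u = u1 ++ [d].
Proof.
  induction u as [|a u IH]; [left; reflexivity|right].
  destruct IH as [->|(u1 & d & ->)]; [exists [], a | exists (a :: u1), d]; reflexivity.
Qed.

Lemma case_odd u : Forall isb u -> vl 1 u mod 2 = 1 -> vl 1 u <> 1 ->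
  exists u1, u = u1 ++ [s1_2] /\ Forall isb u1.
Proof.
  intros Hu H1 H2. destruct (snoc_cases u) as [->|(u1 & d & ->)]; [contradiction H2; reflexivity|].
  apply Forall_app in Hu. destruct Hu as [Hu1 Hd]. inversion Hd as [|? ? Hd' _]; subst.
  destruct Hd' as [->| ->].
  - rewrite vl_snoc in H1; cbn [upd] in H1. lia.
  - exists u1; auto.
Qed.

Lemma case_even u : Forall isb u -> vl 1 u mod 2 = 0 ->
  exists u1, u = u1 ++ [s0_2] /\ Forall isb u1 /\ vl 1 u = 2 * vl 1 u1.
Proof.
  intros Hu H1. destruct (snoc_cases u) as [->|(u1 & d & ->)]; [discriminate H1|].
  apply Forall_app in Hu. destruct Hu as [Hu1 Hd]. inversion Hd as [|? ? Hd' _]; subst.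
  destruct Hd' as [->| ->].
  - exists u1. rewrite vl_snoc. auto.
  - rewrite vl_snoc in H1; cbn [upd] in H1. lia.
Qed.

Definition Q c n := nonconvergent n /\ forall k, traj n k mod 8 <> c.
Definition P c w := exists u, Forall digit u /\ w = lhd :: u ++ [rhd'] /\ Q c (2 * vl 1 u + 1).

Lemma Q_S c n : Q c n -> Q c (Smap n).
Proof. intros [H1 H2]; split; intro k; rewrite <- traj_S; auto. Qed.

Lemma isb_digit u : Forall isb u -> Forall digit u.
Proof. apply Forall_impl. intros s [-> | ->]; split; discriminate. Qed.

Lemma A_ex b t : isb b -> ist t -> exists c0 d, In ([b;t],[c0;d]) A_rules /\
  digit c0 /\ digit d /\ forall y, vl y [b;t] = vl y [c0;d].
Proof.
  intros [-> | ->] [->|[-> | ->]];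
  [exists s0_3, s0_2 | exists s0_3, s1_2 | exists s1_3, s0_2 | exists s1_3, s1_2
  | exists s2_3, s0_2 | exists s2_3, s1_2];
  (split; [simpl; tauto|]); repeat split; try discriminate; intro y; unfold vl; simpl; lia.
Qed.

Lemma B_ex t : ist t -> exists r, In ([lhd;t], lhd :: r) B_rules /\
  Forall digit r /\ vl 1 r = upd 1 t.
Proof.
  intros [->|[-> | ->]];
  [exists [s1_2] | exists [s0_2; s0_2] | exists [s0_2; s1_2]];
  (split; [simpl; tauto|]); split; try reflexivity;
  repeat constructor; discriminate.
Qed.

Lemma tern_step c R : (forall x, In x A_rules -> In x R) -> (forall x, In x B_rules -> In x R) ->
  forall p t q, Forall isb p -> ist t -> Forall digit q -> Q c (2 * vl 1 (p ++ t :: q) + 1) ->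
  exists w', step R (lhd :: (p ++ t :: q) ++ [rhd']) w' /\ P c w'.
Proof.
  intros HA HB p t q Hp Ht Hq HQ.
  destruct (snoc_cases p) as [->|(p' & b & ->)].
  - destruct (B_ex t Ht) as (r & Hin & Hr & Hv).
    exists (lhd :: (r ++ q) ++ [rhd']). split.
    + exists [], (q ++ [rhd']), [lhd; t], (lhd :: r). split; [apply HB; exact Hin|].
      split; simpl; [reflexivity|]. rewrite <- app_assoc; reflexivity.
    + exists (r ++ q). split; [apply Forall_app; auto|]. split; [reflexivity|].
      rewrite vl_app, Hv. exact HQ.
  - apply Forall_app in Hp. destruct Hp as [Hp' Hb]. inversion Hb as [|? ? Hb' _]; subst.
    destruct (A_ex b t Hb' Ht) as (c0 & d & Hin & Hc0 & Hd & Hv).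
    exists (lhd :: (p' ++ [c0; d] ++ q) ++ [rhd']). split.
    + exists (lhd :: p'), (q ++ [rhd']), [b; t], [c0; d]. split; [apply HA; exact Hin|].
      split; simpl; rewrite <- ?app_assoc; reflexivity.
    + exists (p' ++ [c0; d] ++ q). split.
      { apply Forall_app; split; [apply isb_digit; auto|]. exact (Forall_cons _ Hc0 (Forall_cons _ Hd Hq)). }
      split; [reflexivity|].
      rewrite !vl_app, <- Hv. rewrite <- !app_assoc in HQ. rewrite !vl_app in HQ. exact HQ.
Qed.

Lemma small c X : Q c (2 * X + 1) -> X <> 0 /\ X <> 1 /\ X <> 2 /\ (2 * X + 1) mod 8 <> c.
Proof.
  intros [H1 H2]. repeat split.
  - intro E; subst. apply (H1 0). reflexivity.
  - intro E; subst. apply (H1 2). reflexivity.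
  - intro E; subst. apply (H1 1). reflexivity.
  - apply (H2 0).
Qed.

Lemma odd_step c R : In DS_r3 R -> forall u, Forall isb u -> vl 1 u mod 2 = 1 ->
  Q c (2 * vl 1 u + 1) -> exists w', step R (lhd :: u ++ [rhd']) w' /\ P c w'.
Proof.
  intros HR u Hu Ho HQ. destruct (small c _ HQ) as (_ & H1 & _).
  destruct (case_odd u Hu Ho H1) as (u1 & -> & Hu1).
  exists (lhd :: (u1 ++ [s2_3]) ++ [rhd']). split.
  - exists (lhd :: u1), [], [s1_2; rhd'], [s2_3; rhd']. split; [exact HR|].
    split; simpl; rewrite <- ?app_assoc; reflexivity.
  - exists (u1 ++ [s2_3]). split.
    { apply Forall_app; split; [apply isb_digit; auto|]. repeat constructor; discriminate. }
    split; [reflexivity|]. rewrite vl_snoc in *. cbn [upd] in *.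
    rewrite <- Smap_r3. apply Q_S. exact HQ.
Qed.

Lemma bin_step1 u : Forall isb u -> Q 1 (2 * vl 1 u + 1) ->
  exists w', step S1_rules (lhd :: u ++ [rhd']) w' /\ P 1 w'.
Proof.
  intros Hu HQ. destruct (Nat.eq_dec (vl 1 u mod 2) 1) as [Ho|He].
  - apply odd_step; auto. unfold S1_rules; simpl; tauto.
  - destruct (small 1 _ HQ) as (_ & _ & H2 & H8).
    destruct (case_even u Hu ltac:(lia)) as (u1 & -> & Hu1 & Hv).
    rewrite Hv in H2, H8.
    destruct (case_odd u1 Hu1 ltac:(lia) ltac:(lia)) as (u2 & -> & Hu2).
    exists (lhd :: u2 ++ [rhd']). split.
    + exists (lhd :: u2), [], [s1_2; s0_2; rhd'], [rhd']. split; [unfold S1_rules; simpl; tauto|].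
      split; simpl; rewrite <- ?app_assoc; reflexivity.
    + exists u2. split; [apply isb_digit; auto|]. split; [reflexivity|].
      rewrite Hv, vl_snoc in HQ. cbn [upd] in HQ. rewrite <- Smap_r2. apply Q_S. exact HQ.
Qed.

Lemma bin_step2 u : Forall isb u -> Q 5 (2 * vl 1 u + 1) ->
  exists w', step S2_rules (lhd :: u ++ [rhd']) w' /\ P 5 w'.
Proof.
  intros Hu HQ. destruct (Nat.eq_dec (vl 1 u mod 2) 1) as [Ho|He].
  - apply odd_step; auto. unfold S2_rules; simpl; tauto.
  - destruct (small 5 _ HQ) as (_ & _ & H2 & H8).
    destruct (case_even u Hu ltac:(lia)) as (u1 & -> & Hu1 & Hv).
    rewrite Hv in H2, H8.
    destruct (case_even u1 Hu1 ltac:(lia)) as (u2 & -> & Hu2 & Hv2).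
    exists (lhd :: (u2 ++ [s0_3]) ++ [rhd']). split.
    + exists (lhd :: u2), [], [s0_2; s0_2; rhd'], [s0_3; rhd']. split; [unfold S2_rules; simpl; tauto|].
      split; simpl; rewrite <- ?app_assoc; reflexivity.
    + exists (u2 ++ [s0_3]). split.
      { apply Forall_app; split; [apply isb_digit; auto|]. repeat constructor; discriminate. }
      split; [reflexivity|].
      rewrite Hv, Hv2 in HQ. rewrite vl_snoc. cbn [upd]. rewrite <- Smap_r1. apply Q_S. exact HQ.
Qed.

Lemma gen_step c R : (forall x, In x A_rules -> In x R) -> (forall x, In x B_rules -> In x R) ->
  (forall u, Forall isb u -> Q c (2 * vl 1 u + 1) ->
     exists w', step R (lhd :: u ++ [rhd']) w' /\ P c w') ->
  forall w, P c w -> exists w', step R w w' /\ P c w'.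
Proof.
  intros HA HB Hbin w (u & Hu & -> & HQ).
  destruct (leftmost u Hu) as [Hb|(p & t & q & Hp & Ht & -> & Hq)].
  - apply Hbin; auto.
  - apply tern_step; auto.
Qed.

Lemma infinite c R w0 : P c w0 -> (forall w, P c w -> exists w', step R w w' /\ P c w') ->
  ~ terminating R.
Proof.
  intros H0 Hs Ht. apply Ht.
  set (next := fun w => epsilon (inhabits w) (fun w' => step R w w' /\ P c w')).
  assert (Hn : forall w, P c w -> step R w (next w) /\ P c (next w)).
  { intros w Hw. unfold next. apply epsilon_spec. auto. }
  exists (fun i => Nat.iter i next w0).
  assert (HP : forall i, P c (Nat.iter i next w0)).
  { induction i; simpl; [auto | apply Hn; auto]. }
  intro i. simpl. apply Hn, HP.
Qed.

Lemma nonterm c R : (forall x, In x A_rules -> In x R) -> (forall x, In x B_rules -> In x R) ->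
  (forall u, Forall isb u -> Q c (2 * vl 1 u + 1) ->
     exists w', step R (lhd :: u ++ [rhd']) w' /\ P c w') ->
  terminating R -> Hyp c.
Proof.
  intros HA HB Hbin Ht n Hodd Hnc. apply NNPP. intro Hno.
  assert (HQ : Q c n) by (split; [auto | intros k Hk; apply Hno; eauto]).
  apply Nat.odd_spec in Hodd. destruct Hodd as [m ->].
  assert (Hm : 1 <= m) by (destruct m; [exfalso; apply (Hnc 0); reflexivity | lia]).
  destruct (rep m Hm) as (u & Hu & Hv).
  apply (infinite c R (lhd :: u ++ [rhd'])); [| apply gen_step; auto | exact Ht].
  exists u. split; [apply isb_digit; auto|]. split; [reflexivity|]. rewrite Hv. exact HQ.
Qed.

Theorem mainTheorem12 :
  (terminating S1_rules <->
     (forall n, Nat.odd n = true -> nonconvergent n ->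
        exists k, traj n k mod 8 = 1)) /\
  (terminating S2_rules <->
     (forall n, Nat.odd n = true -> nonconvergent n ->
        exists k, traj n k mod 8 = 5)).
Proof.
  split; split.
  - apply (nonterm 1 S1_rules); [| | exact bin_step1];
      intros x Hx; unfold S1_rules; cbn [app In]; right; right; apply in_or_app; auto.
  - exact term1.
  - apply (nonterm 5 S2_rules); [| | exact bin_step2];
      intros x Hx; unfold S2_rules; cbn [app In]; right; right; apply in_or_app; auto.
  - exact term2.
Qed.

Print Assumptions mainTheorem12.
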